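(* Let $\mathcal{L}$ be the liability sheaf on $\mathcal{H}_G$ of a liability network $N=(G,X,\lambda,\iota;\delta,\hat\alpha)$ valued in $\mathbf{DCPO}$, $G=(V,E,s,t)$, with each payment object $X_v$ a complete lattice object. Let $\mathcal{G}_P=\mathrm{Hom}(1,P)$ for $P=\prod_vX_v$, with bottom $\bot$ and top $\top$, let $\Phi_*$ be the action of the clearing operator on $\mathcal{G}_P$, and let $\mathbf{x}_{\min},\mathbf{x}_{\max}\in\mathcal{G}_P$ be the institution-coordinate projections of the least and greatest clearing sections (least and greatest elements of $\Gamma(\mathcal{H}_G;\mathcal{L})$ in the pointwise order on institution components). Then $\Phi_*$ is Scott-continuous and $\mathbf{x}_{\min}=\sup_{n\ge0}\Phi_*^n(\bot)$. If in addition $\Phi_*$ preserves filtered infima — as it does whenever each $X_v$ has finite height, or $\mathcal{G}_P$ is a finite product of compact real intervals on which the $\delta_e,\alpha_v$ are continuous in the Euclidean topology — then $\mathbf{x}_{\max}=\inf_{n\ge0}\Phi_*^n(\top)$.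
   Context: $\mathbf{DCPO}$ is the category of directed-complete partial orders and Scott-continuous maps, regarded as a liability category: the terminal object is the one-point dcpo, $\mathrm{Hom}(1,P)=P$ with its order, products are componentwise, constraint subobjects are Scott-closed downsets, and the bound selector sends $\rho\in P$ to the principal ideal $\downarrow\rho=\{x\in P:x\leqslant\rho\}$. An object is a complete lattice object if its underlying poset is a complete lattice. A liability network in $\mathbf{DCPO}$: finite directed graph $G=(V,E,s,t)$, payment objects $X_v$, liability elements $\lambda_e\in X_{s(e)}$, exogenous resources $\iota_v\in X_v$, Scott-continuous distributors $\delta_e:X_{s(e)}\to X_{s(e)}^{\lambda_e}:=\downarrow\lambda_e$, Scott-continuous aggregators $\hat\alpha_v:X_v\times\prod_{t(e)=v}X_{s(e)}^{\lambda_e}\to X_v$, and partial aggregators $\alpha_v((p_e))=\hat\alpha_v(\iota_v,(p_e))$ (empty products are the one-point dcpo). The clearing operator is $\Phi:P\to P$, $\Phi(\mathbf{x})_v=\alpha_v((\delta_e(x_{s(e)}))_{t(e)=v})$, and $\Phi_*$ is its action on global elements. The liability hypergraph $\mathcal{H}_G$ has vertices $V\sqcup\{e^*\}$ and hyperedges $h_v^\delta$ (source $\{v\}$, target $\{e^*:s(e)=v\}$), $h_v^\alpha$ (empty source, target $\{e^*:t(e)=v\}\cup\{v\}$); its incidence category has one arrow $h\to w$ per incidence and no composites. The liability sheaf has stalks $X_v$ at $v,h_v^\delta$; $X_{s(e)}^{\lambda_e}$ at $e^*$; $\prod_{t(e)=v}X_{s(e)}^{\lambda_e}$ at $h_v^\alpha$;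 restrictions $\mathrm{id},\delta_e,\pi_e,\alpha_v$. Global sections $\Gamma(\mathcal{H}_G;\mathcal{L})$ are the global elements of the limit of this diagram; they correspond to families $(x_v,p_e)$ with $p_e=\delta_e(x_{s(e)})$ and $x_v=\alpha_v((p_e)_{t(e)=v})$, i.e. to fixed points of $\Phi_*$; clearing sections means global sections. *)

(* Defs.v *)
From mathcomp Require Import all_boot.
From Stdlib Require Import Reals.


Definition partial_order {T : Type} (le : T -> T -> Prop) : Prop :=
  (forall x, le x x) /\
  (forall x y, le x y -> le y x -> x = y) /\
  (forall x y z, le x y -> le y z -> le x z).

Definition directed {T : Type} (le : T -> T -> Prop) (D : T -> Prop) : Prop :=
  (exists x, D x) /\
  (forall x y, D x -> D y -> exists z, D z /\ le x z /\ le y z).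

Definition filtered {T : Type} (le : T -> T -> Prop) (D : T -> Prop) : Prop :=
  (exists x, D x) /\
  (forall x y, D x -> D y -> exists z, D z /\ le z x /\ le z y).

Definition is_sup {T : Type} (le : T -> T -> Prop) (D : T -> Prop) (s : T) : Prop :=
  (forall x, D x -> le x s) /\
  (forall u, (forall x, D x -> le x u) -> le s u).

Definition is_inf {T : Type} (le : T -> T -> Prop) (D : T -> Prop) (s : T) : Prop :=
  (forall x, D x -> le s x) /\
  (forall l, (forall x, D x -> le l x) -> le l s).

Definition img {A B : Type} (f : A -> B) (D : A -> Prop) : B -> Prop :=
  fun y => exists x, D x /\ y = f x.

Definition dcpo {T : Type} (le : T -> T -> Prop) : Prop :=
  partial_order le /\ (forall D, directed le D -> exists s, is_sup le D s).

Definition complete_lattice {T : Type} (le : T -> T -> Prop) : Prop :=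
  partial_order le /\ (forall D : T -> Prop, exists s, is_sup le D s).

Definition scott_continuous {A B : Type} (leA : A -> A -> Prop)
  (leB : B -> B -> Prop) (f : A -> B) : Prop :=
  forall D s, directed leA D -> is_sup leA D s -> is_sup leB (img f D) (f s).

Definition preserves_filtered_infs {A B : Type} (leA : A -> A -> Prop)
  (leB : B -> B -> Prop) (f : A -> B) : Prop :=
  forall D s, filtered leA D -> is_inf leA D s -> is_inf leB (img f D) (f s).

Definition finite_height {T : Type} (le : T -> T -> Prop) : Prop :=
  exists h : nat, forall (c : nat -> T) (n : nat),
    (forall i, (i < n)%N -> le (c i) (c i.+1) /\ c i <> c i.+1) -> (n <= h)%N.

Definition downset {T : Type} (le : T -> T -> Prop) (l : T) : Type :=
  {x : T | le x l}.

Definition sub_le {T : Type} (le : T -> T -> Prop) (l : T) :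
  downset le l -> downset le l -> Prop :=
  fun x y => le (proj1_sig x) (proj1_sig y).

Definition pi_le {I : Type} {F : I -> Type} (le : forall i, F i -> F i -> Prop) :
  (forall i, F i) -> (forall i, F i) -> Prop :=
  fun f g => forall i, le i (f i) (g i).

Definition pair_le {A B : Type} (leA : A -> A -> Prop) (leB : B -> B -> Prop) :
  A * B -> A * B -> Prop :=
  fun p q => leA p.1 q.1 /\ leB p.2 q.2.

Record network := Network {
  V : finType;
  E : finType;
  src : E -> V;
  tgt : E -> V;
  X : V -> Type;
  leX : forall v, X v -> X v -> Prop;
  X_dcpo : forall v, dcpo (leX v);
  lam : forall e, X (src e);
  iota : forall v, X v;
  delta : forall e, X (src e) -> downset (leX (src e)) (lam e);
  delta_sc : forall e,
    scott_continuous (leX (src e)) (sub_le (leX (src e)) (lam e)) (delta e);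
  ahat : forall v,
    X v * (forall e : {e : E | tgt e == v},
             downset (leX (src (proj1_sig e))) (lam (proj1_sig e))) -> X v;
  ahat_sc : forall v,
    scott_continuous
      (pair_le (leX v)
         (pi_le (fun e : {e : E | tgt e == v} =>
                   sub_le (leX (src (proj1_sig e))) (lam (proj1_sig e)))))
      (leX v) (ahat v)
}.

Section NetworkDefs.
Variable N : network.

(* incoming-liability product  prod_{t(e)=v} X_{s(e)}^{lambda_e} *)
Definition inprod (v : V N) : Type :=
  forall e : {e : E N | tgt N e == v},
    downset (leX N (src N (proj1_sig e))) (lam N (proj1_sig e)).

Definition alpha (v : V N) (p : inprod v) : X N v := ahat N v (iota N v, p).

(* P = prod_v X_v and its global elements with the product order *)
Definition PP : Type := forall v : V N, X N v.
Definition leGP : PP -> PP -> Prop := pi_le (leX N).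

Definition Phi (x : PP) : PP :=
  fun v => alpha v (fun e => delta N (proj1_sig e) (x (src N (proj1_sig e)))).

(* Global sections of the liability sheaf on the liability hypergraph:
   an element at every vertex v, e*, h_v^delta, h_v^alpha, compatible with
   every incidence restriction (id, delta_e, pi_e, alpha_v). *)
Definition is_global_section (xv : forall v, X N v)
  (pe : forall e, downset (leX N (src N e)) (lam N e))
  (hd : forall v, X N v) (ha : forall v, inprod v) : Prop :=
  (* h_v^delta -> v : id *)
  (forall v, hd v = xv v) /\
  (* h_{s(e)}^delta -> e* : delta_e *)
  (forall e, delta N e (hd (src N e)) = pe e) /\
  (* h_v^alpha -> e* (t(e) = v) : pi_e *)
  (forall v (e : {e : E N | tgt N e == v}), ha v e = pe (proj1_sig e)) /\
  (* h_v^alpha -> v : alpha_v *)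
  (forall v, alpha v (ha v) = xv v).

Definition clearing_projection (x : PP) : Prop :=
  exists pe hd ha, is_global_section x pe hd ha.

Definition is_least_clearing (x : PP) : Prop :=
  clearing_projection x /\ forall y, clearing_projection y -> leGP x y.

Definition is_greatest_clearing (x : PP) : Prop :=
  clearing_projection x /\ forall y, clearing_projection y -> leGP y x.

Definition iterates (x0 : PP) : PP -> Prop :=
  fun y => exists n : nat, y = iter n Phi x0.

Definition box_chart {T : Type} (le : T -> T -> Prop) (k : nat)
  (phi : T -> 'I_k -> R) (a b : 'I_k -> R) : Prop :=
  (forall x y, le x y <-> forall i, (phi x i <= phi y i)%R) /\
  (forall x i, (a i <= phi x i <= b i)%R) /\
  (forall z : 'I_k -> R, (forall i, (a i <= z i <= b i)%R) ->
     exists x, forall i, phi x i = z i).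

(* G_P is a finite product of compact real intervals, on which the
   delta_e and alpha_v are continuous in the Euclidean topology
   (sequential continuity, equivalent here since the spaces are metric). *)
Definition real_box_case : Prop :=
  exists (k : V N -> nat) (phi : forall v, X N v -> 'I_(k v) -> R)
         (a b : forall v, 'I_(k v) -> R),
    (forall v, box_chart (leX N v) (k v) (phi v) (a v) (b v)) /\
    (forall e (u : nat -> X N (src N e)) (x : X N (src N e)),
       (forall i, Un_cv (fun n => phi _ (u n) i) (phi _ x i)) ->
       forall j, Un_cv (fun n => phi _ (proj1_sig (delta N e (u n))) j)
                       (phi _ (proj1_sig (delta N e x)) j)) /\
    (forall v (u : nat -> inprod v) (p : inprod v),
       (forall (e : {e : E N | tgt N e == v}) i,
          Un_cv (fun n => phi _ (proj1_sig (u n e)) i) (phi _ (proj1_sig (p e)) i)) ->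
       forall j, Un_cv (fun n => phi v (alpha v (u n)) j) (phi v (alpha v p) j)).

End NetworkDefs.

(* Main.v *)
Require Import Defs.
From mathcomp Require Import all_boot.
From mathcomp Require Import zify.
From Stdlib Require Import Reals Lra.
From Stdlib Require Import ClassicalEpsilon FunctionalExtensionality Classical.

Lemma sc_mono {A B : Type} (leA : A -> A -> Prop) (leB : B -> B -> Prop) f :
  (forall x, leA x x) -> scott_continuous leA leB f ->
  forall x y, leA x y -> leB (f x) (f y).
Proof.
move=> Hr Hf x y Hxy.
have Hd : directed leA (fun z => z = x \/ z = y).
  split; first by exists x; left.
  move=> a b Ha Hb; exists y; split; first by right.
  by split; [case: Ha => ->|case: Hb => ->].
have Hs : is_sup leA (fun z => z = x \/ z = y) y.
  split; first by move=> z [->|->].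
  by move=> u Hu; apply: Hu; right.
have [H1 _] := Hf _ _ Hd Hs.
apply: H1; exists x; split=> //; by left.
Qed.

Lemma is_sup_ext {T} (le : T -> T -> Prop) D1 D2 s :
  (forall a, D1 a <-> D2 a) -> is_sup le D1 s -> is_sup le D2 s.
Proof.
move=> He [H1 H2]; split; first by move=> x /He; apply: H1.
move=> u Hu; apply: H2 => x /He; apply: Hu.
Qed.

Lemma sup_unique {T} (le : T -> T -> Prop) D s t :
  partial_order le -> is_sup le D s -> is_sup le D t -> s = t.
Proof.
move=> [_ [Ha _]] [S1 S2] [T1 T2]; apply: Ha; [apply: S2 | apply: T2]; done.
Qed.

Lemma cl_inf {T} (le : T -> T -> Prop) :
  complete_lattice le -> forall D, exists s, is_inf le D s.
Proof.
move=> [_ Hs] D.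
have [s [S1 S2]] := Hs (fun l => forall x, D x -> le l x).
exists s; split.
- move=> x Dx; apply: S2 => l Hl; exact: Hl.
- move=> l Hl; exact: S1.
Qed.

Lemma po_flip {T} (le : T -> T -> Prop) :
  partial_order le -> partial_order (fun x y => le y x).
Proof.
move=> [Hr [Ha Ht]]; split=> //; split.
- move=> x y H1 H2; exact: Ha.
- move=> x y z H1 H2; exact: Ht H2 H1.
Qed.

Lemma kleene {T} (le : T -> T -> Prop) (f : T -> T) :
  partial_order le -> scott_continuous le le f ->
  (forall D, exists s, is_sup le D s) ->
  forall bot xmin, (forall x, le bot x) -> f xmin = xmin ->
  (forall y, f y = y -> le xmin y) ->
  is_sup le (fun y => exists n, y = iter n f bot) xmin.
Proof.
move=> Hpo Hf Hall bot xmin Hbot Hfix Hleast.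
have Hr : forall x, le x x by case: Hpo.
have Ht : forall x y z, le x y -> le y z -> le x z by case: Hpo => _ [].
have Hm := @sc_mono _ _ le le f Hr Hf.
have Hch : forall n k, le (iter n f bot) (iter (n + k) f bot).
  elim=> [|n IH] k; first by apply: Hbot.
  rewrite addSn /=; apply: Hm; exact: IH.
set It := fun y => exists n, y = iter n f bot.
have Hd : directed le It.
  split; first by exists bot; exists 0.
  move=> x y [n ->] [m ->]; exists (iter (n + m) f bot); split; first by exists (n+m).
  split; first exact: Hch.
  rewrite addnC; exact: Hch.
have [s Hs] := Hall It.
have Hs' := Hf _ _ Hd Hs.
have Hs2 : is_sup le (img f It) s.
  case: Hs => S1 S2; split.
  - move=> x [y [[n ->] ->]]; apply: S1; by exists n.+1.
  - move=> u Hu; apply: S2 => x [n ->]; case: n => [|n]; first exact: Hbot.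
    apply: Hu; exists (iter n f bot); split=> //; by exists n.
have Efs : f s = s := @sup_unique _ le _ _ _ Hpo Hs' Hs2.
have Hxs := Hleast _ Efs.
split.
- move=> x [n ->]; elim: n => [|n IH] /=; first exact: Hbot.
  rewrite -Hfix; exact: Hm.
- move=> u Hu; apply: Ht Hxs _; case: Hs => _ S2; exact: S2.
Qed.

Section Dummy. End Dummy.

Lemma leX_refl (N : network) v (x : X N v) : leX N v x x.
Proof. by case: (X_dcpo N v) => [[H _] _]. Qed.
Lemma leX_anti (N : network) v (x y : X N v) : leX N v x y -> leX N v y x -> x = y.
Proof. by case: (X_dcpo N v) => [[_ [H _]] _]; apply: H. Qed.
Lemma leX_trans (N : network) v (x y z : X N v) : leX N v x y -> leX N v y z -> leX N v x z.
Proof. case: (X_dcpo N v) => [[_ [_ H]] _]; exact: H. Qed.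

Lemma leGP_po (N : network) : partial_order (leGP N).
Proof.
split; first by move=> x v; apply: leX_refl.
split.
- move=> x y H1 H2; apply: functional_extensionality_dep => v; exact: leX_anti.
- move=> x y z H1 H2 v; exact: leX_trans (H1 v) (H2 v).
Qed.

Lemma sup_of_proj (N : network) (D : PP N -> Prop) s :
  (forall v, is_sup (leX N v) (img (fun x : PP N => x v) D) (s v)) ->
  is_sup (leGP N) D s.
Proof.
move=> H; split.
- move=> x Dx v; case: (H v) => H1 _; apply: H1; by exists x.
- move=> u Hu v; case: (H v) => _ H2; apply: H2 => a [x [Dx ->]]; exact: Hu.
Qed.

Lemma exists_sup (N : network) (Hcl : forall v : V N, complete_lattice (leX N v))
  (D : PP N -> Prop) : exists s, is_sup (leGP N) D s.
Proof.
pose t := fun w => proj1_sig (constructive_indefinite_description _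
                 ((Hcl w).2 (img (fun x : PP N => x w) D))).
exists t; apply: sup_of_proj => v.
exact: (proj2_sig (constructive_indefinite_description _
                 ((Hcl v).2 (img (fun x : PP N => x v) D)))).
Qed.

Lemma sup_proj (N : network) (Hcl : forall v : V N, complete_lattice (leX N v))
  (D : PP N -> Prop) s : is_sup (leGP N) D s ->
  forall v, is_sup (leX N v) (img (fun x : PP N => x v) D) (s v).
Proof.
move=> Hs.
pose t := fun w => proj1_sig (constructive_indefinite_description _
                 ((Hcl w).2 (img (fun x : PP N => x w) D))).
have Ht : forall w, is_sup (leX N w) (img (fun x : PP N => x w) D) (t w).
  move=> w; exact: (proj2_sig (constructive_indefinite_description _
                 ((Hcl w).2 (img (fun x : PP N => x w) D)))).
have Hts : is_sup (leGP N) D t by apply: sup_of_proj.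
have -> : s = t by apply: (@sup_unique _ (leGP N) D); [apply: leGP_po|..].
exact: Ht.
Qed.

Lemma inf_of_proj (N : network) (D : PP N -> Prop) s :
  (forall v, is_inf (leX N v) (img (fun x : PP N => x v) D) (s v)) ->
  is_inf (leGP N) D s.
Proof.
move=> H; split.
- move=> x Dx v; case: (H v) => H1 _; apply: H1; by exists x.
- move=> u Hu v; case: (H v) => _ H2; apply: H2 => a [x [Dx ->]]; exact: Hu.
Qed.

Lemma exists_inf (N : network) (Hcl : forall v : V N, complete_lattice (leX N v))
  (D : PP N -> Prop) : exists s, is_inf (leGP N) D s.
Proof.
have Hi := fun w => @cl_inf _ _ (Hcl w).
pose t := fun w => proj1_sig (constructive_indefinite_description _
                 (Hi w (img (fun x : PP N => x w) D))).
exists t; apply: inf_of_proj => v.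
exact: (proj2_sig (constructive_indefinite_description _
                 (Hi v (img (fun x : PP N => x v) D)))).
Qed.

Lemma inf_proj (N : network) (Hcl : forall v : V N, complete_lattice (leX N v))
  (D : PP N -> Prop) s : is_inf (leGP N) D s ->
  forall v, is_inf (leX N v) (img (fun x : PP N => x v) D) (s v).
Proof.
move=> Hs.
have Hi := fun w => @cl_inf _ _ (Hcl w).
pose t := fun w => proj1_sig (constructive_indefinite_description _
                 (Hi w (img (fun x : PP N => x w) D))).
have Ht : forall w, is_inf (leX N w) (img (fun x : PP N => x w) D) (t w).
  move=> w; exact: (proj2_sig (constructive_indefinite_description _
                 (Hi w (img (fun x : PP N => x w) D)))).
have Hts : is_inf (leGP N) D t by apply: inf_of_proj.
have -> : s = t.
  apply: (@sup_unique _ (fun x y => leGP N y x) D); [apply: po_flip; apply: leGP_po|exact: Hs|exact: Hts].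
exact: Ht.
Qed.

Lemma clear_fix (N : network) x : clearing_projection N x -> Phi N x = x.
Proof.
move=> [pe [hd [ha [H1 [H2 [H3 H4]]]]]].
apply: functional_extensionality_dep => v.
rewrite -H4 /Phi; congr (alpha _ _).
apply: functional_extensionality_dep => e.
by rewrite H3 -H2 H1.
Qed.

Lemma fix_clear (N : network) x : Phi N x = x -> clearing_projection N x.
Proof.
move=> Hx.
exists (fun e => delta N e (x (src N e))), x,
  (fun v (e : {e : E N | tgt N e == v}) => delta N (proj1_sig e) (x (src N (proj1_sig e)))).
split=> //; split=> //; split=> // v.
by rewrite -{2}Hx.
Qed.

Lemma delta_mono (N : network) e (x y : X N (src N e)) :
  leX N _ x y -> sub_le (leX N (src N e)) (lam N e) (delta N e x) (delta N e y).
Proof.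
apply: (@sc_mono _ _ (leX N (src N e))); last exact: delta_sc.
exact: leX_refl.
Qed.

Lemma proj_directed (N : network) (D : PP N -> Prop) v :
  directed (leGP N) D -> directed (leX N v) (img (fun x : PP N => x v) D).
Proof.
move=> [[x0 Hx0] Hd]; split; first by exists (x0 v), x0.
move=> a b [x [Dx ->]] [y [Dy ->]].
have [z [Dz [Hxz Hyz]]] := Hd _ _ Dx Dy.
exists (z v); split; first by exists z.
by split; [apply: Hxz|apply: Hyz].
Qed.

Lemma Phi_sc (N : network) (Hcl : forall v : V N, complete_lattice (leX N v)) :
  scott_continuous (leGP N) (leGP N) (Phi N).
Proof.
move=> D s HD Hs.
have Hsv := @sup_proj N Hcl _ _ Hs.
apply: sup_of_proj => v.
pose g := fun x : PP N => (Defs.iota N v,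
   (fun e : {e : E N | tgt N e == v} => delta N (proj1_sig e) (x (src N (proj1_sig e))))).
have HD' : directed (pair_le (leX N v)
         (pi_le (fun e : {e : E N | tgt N e == v} =>
                   sub_le (leX N (src N (proj1_sig e))) (lam N (proj1_sig e))))) (img g D).
  case: HD => [[x0 Hx0] Hd]; split; first by exists (g x0), x0.
  move=> a b [x [Dx ->]] [y [Dy ->]].
  have [z [Dz [Hxz Hyz]]] := Hd _ _ Dx Dy.
  exists (g z); split; first by exists z.
  split; (split; [exact: leX_refl| move=> e; apply: delta_mono]); [apply: Hxz|apply: Hyz].
have Hs' : is_sup (pair_le (leX N v)
         (pi_le (fun e : {e : E N | tgt N e == v} =>
                   sub_le (leX N (src N (proj1_sig e))) (lam N (proj1_sig e))))) (img g D) (g s).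
  split.
  - move=> a [x [Dx ->]]; split; first exact: leX_refl.
    move=> e; apply: delta_mono; case: Hs => H1 _; exact: H1.
  - move=> [a q] Hu; split.
    + case: HD => [[x0 Hx0] _]; have [H _] := Hu (g x0) (ex_intro _ x0 (conj Hx0 erefl)); exact: H.
    + move=> e /=.
      have Hdd := @delta_sc N (proj1_sig e) _ _ (@proj_directed N D _ HD) (Hsv (src N (proj1_sig e))).
      case: Hdd => _ H2; apply: H2 => y [a' [[x [Dx ->]] ->]].
      have [_ H] := Hu (g x) (ex_intro _ x (conj Dx erefl)); exact: (H e).
have := @ahat_sc N v _ _ HD' Hs'.
apply: is_sup_ext => a; split.
- move=> [p [[x [Dx ->]] ->]]; exists (Phi N x); split; first by exists x.
  done.
- move=> [y [[x [Dx ->]] ->]]; exists (g x); split; first by exists x.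
  done.
Qed.

Lemma fh_min {T} (le : T -> T -> Prop) (D : T -> Prop) :
  partial_order le -> finite_height le -> filtered le D ->
  exists m, D m /\ forall x, D x -> le m x.
Proof.
move=> [Hr [Ha Ht]] [h Hh] [[d0 Hd0] Hf].
apply: NNPP => Hno.
have Hno' : forall m, D m -> exists x, D x /\ ~ le m x.
  move=> m Dm; apply: NNPP => H; apply: Hno; exists m; split=> // x Dx.
  apply: NNPP => H'; apply: H; by exists x.
have Hk : forall k, exists c : nat -> T, (forall i, (i <= k)%N -> D (c i)) /\
   (forall i, (i < k)%N -> le (c i.+1) (c i) /\ c i.+1 <> c i).
  elim=> [|k [c [Hc1 Hc2]]].
  - exists (fun _ => d0); split=> // i _.
  - have Dk : D (c k) by apply: Hc1.
    have [d [Dd Hnd]] := Hno' _ Dk.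
    have [z [Dz [Hzk Hzd]]] := Hf _ _ Dk Dd.
    exists (fun i => if (i <= k)%N then c i else z); split.
    + move=> i Hi; case: ifP => Hik; first exact: Hc1.
      done.
    + move=> i Hi; rewrite ltnS in Hi.
      case: (ltnP i k) => Hik.
      * rewrite (ltnW Hik); exact: Hc2.
      * have -> : i = k by lia.
        rewrite leqnn /=; split=> // Ez; apply: Hnd; by rewrite -Ez.
have [c [_ Hc]] := Hk h.+1.
have := Hh (fun i => c (h.+1 - i)) h.+1.
have H : forall i, (i < h.+1)%N ->
    le (c (h.+1 - i)) (c (h.+1 - i.+1)) /\ c (h.+1 - i) <> c (h.+1 - i.+1).
  move=> i Hi; have E1 : (h.+1 - i = (h.+1 - i.+1).+1)%N by lia.
  rewrite E1; apply: Hc; lia.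
move=> /(_ H); by rewrite ltnn.
Qed.

Lemma filt_list {T} (le : T -> T -> Prop) (D : T -> Prop) (A : eqType)
  (P : A -> T -> Prop) (l : seq A) :
  filtered le D -> (forall a x z, le z x -> P a x -> P a z) ->
  (forall a, a \in l -> exists x, D x /\ P a x) ->
  exists z, D z /\ forall a, a \in l -> P a z.
Proof.
move=> [[d0 Hd0] Hf] Hdown; elim: l => [|a l IH] H.
  by exists d0.
have [z1 [Dz1 Hz1]] : exists z, D z /\ forall b, b \in l -> P b z.
  apply: IH => b Hb; apply: H; by rewrite in_cons Hb orbT.
have [x [Dx Px]] := H a (mem_head a l).
have [z [Dz [H1 H2]]] := Hf _ _ Dz1 Dx.
exists z; split=> // b; rewrite in_cons => /orP [/eqP ->|Hb].
- exact: Hdown H2 Px.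
- exact: Hdown H1 (Hz1 b Hb).
Qed.

Lemma part4 (N : network) (Hcl : forall v : V N, complete_lattice (leX N v)) :
  (forall v : V N, finite_height (leX N v)) ->
   preserves_filtered_infs (leGP N) (leGP N) (Phi N).
Proof.
move=> Hfh D s HD Hs.
have Hm := @sc_mono _ _ (leGP N) (leGP N) (Phi N) (leGP_po N).1 (@Phi_sc N Hcl).
have [z [Dz Hz]] : exists z, D z /\ forall v, forall y, D y -> leX N v (z v) (y v).
  have := @filt_list _ (leGP N) D (V N) (fun v z => forall y, D y -> leX N v (z v) (y v))
             (enum (V N)) HD.
  case.
  - move=> v x z Hzx Hx y Dy; exact: leX_trans (Hzx v) (Hx y Dy).
  - move=> v _.
    have HDv : filtered (leX N v) (img (fun x : PP N => x v) D).
      case: HD => [[x0 Hx0] Hd]; split; first by exists (x0 v), x0.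
      move=> a b [x [Dx ->]] [y [Dy ->]].
      have [z [Dz [Hxz Hyz]]] := Hd _ _ Dx Dy.
      exists (z v); split; first by exists z.
      by split; [apply: Hxz|apply: Hyz].
    have [m [[x [Dx ->]] Hm']] := @fh_min _ _ _ (X_dcpo N v).1 (Hfh v) HDv.
    exists x; split=> // y Dy; apply: Hm'; by exists y.
  - move=> z [Dz Hz]; exists z; split=> // v y Dy; apply: Hz=> //; by rewrite mem_enum.
have Esz : s = z.
  apply: (leGP_po N).2.1.
  - case: Hs => H _; exact: H.
  - case: Hs => _ H; apply: H => y Dy v; exact: Hz.
subst s; split.
- move=> y [x [Dx ->]]; apply: Hm => v; exact: Hz.
- move=> l Hl; apply: Hl; by exists z.
Qed.

Lemma part2 (N : network) (Hcl : forall v : V N, complete_lattice (leX N v)) :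
  (forall bot xmin : PP N,
     (forall x, leGP N bot x) -> is_least_clearing N xmin ->
     is_sup (leGP N) (iterates N bot) xmin).
Proof.
move=> bot xmin Hbot [Hc Hl].
apply: kleene => //.
- exact: leGP_po.
- exact: Phi_sc.
- exact: exists_sup.
- exact: clear_fix.
- move=> y Hy; apply: Hl; exact: fix_clear.
Qed.

Lemma part3 (N : network) (Hcl : forall v : V N, complete_lattice (leX N v)) :
  (preserves_filtered_infs (leGP N) (leGP N) (Phi N) ->
   forall top xmax : PP N,
     (forall x, leGP N x top) -> is_greatest_clearing N xmax ->
     is_inf (leGP N) (iterates N top) xmax).
Proof.
move=> Hpf top xmax Htop [Hc Hl].
apply: (@kleene _ (fun x y => leGP N y x)) => //.
- apply: po_flip; exact: leGP_po.
- exact: exists_inf.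
- exact: clear_fix.
- move=> y Hy; apply: Hl; exact: fix_clear.
Qed.

Lemma inv_small eps : (0 < eps)%R -> exists N : nat, forall n, (N <= n)%coq_nat -> (/ INR (S n) < eps)%R.
Proof.
move=> He; have [N HN] := INR_archimed eps 1 He.
exists N => n Hn.
have H1 : (INR N <= INR (S n))%R by apply: le_INR; lia.
have H0 : (0 < INR (S n))%R by apply: lt_0_INR; lia.
have H2 : (1 < INR (S n) * eps)%R by nra.
apply: (Rmult_lt_reg_l (INR (S n))) => //.
rewrite Rinv_r; lra.
Qed.

Lemma cv_const c : Un_cv (fun _ : nat => c) c.
Proof. move=> eps He; exists 0%N => n _; rewrite /Rdist Rminus_diag Rabs_R0; lra. Qed.

Lemma cv_squeeze (u : nat -> R) l :
  (forall n, l <= u n < l + / INR (S n))%R -> Un_cv u l.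
Proof.
move=> H eps He; have [N HN] := @inv_small eps He.
exists N => n Hn; have := HN n Hn; have := H n; move=> H1 H2.
rewrite /Rdist Rabs_pos_eq; lra.
Qed.

Lemma part5 (N : network) (Hcl : forall v : V N, complete_lattice (leX N v)) :
  real_box_case N -> preserves_filtered_infs (leGP N) (leGP N) (Phi N).
Proof.
move=> [k [phi [a [b [Hbox [Hdel Hal]]]]]] D s HD Hs.
have Hm := @sc_mono _ _ (leGP N) (leGP N) (Phi N) (leGP_po N).1 (@Phi_sc N Hcl).
have Hsv := @inf_proj N Hcl _ _ Hs.
have Hle : forall v (x y : X N v) i, leX N v x y -> (phi v x i <= phi v y i)%R.
  move=> v x y i H; exact: ((Hbox v).1 x y).1 H i.
have [[x0 Hx0] Hfilt] := HD.
have Happ : forall v i eps, (0 < eps)%R ->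
    exists x, D x /\ (phi v (x v) i < phi v (s v) i + eps)%R.
  move=> v i eps He; apply: NNPP => Hno.
  have Hge : forall x, D x -> (phi v (s v) i + eps <= phi v (x v) i)%R.
    move=> x Dx; apply: Rnot_lt_le => H; apply: Hno; by exists x.
  pose z := fun j : 'I_(k v) => if j == i then (phi v (s v) i + eps)%R else phi v (s v) j.
  have Hz : forall j, (a v j <= z j <= b v j)%R.
    move=> j; rewrite /z; case: eqP => [->|_]; last exact: (Hbox v).2.1.
    have := (Hbox v).2.1 (s v) i; have := (Hbox v).2.1 (x0 v) i; have := Hge _ Hx0; lra.
  have [y Hy] := (Hbox v).2.2 z Hz.
  have Hys : leX N v y (s v).
    case: (Hsv v) => _ H; apply: H => c [x [Dx ->]].
    apply/((Hbox v).1 y (x v)) => j; rewrite Hy /z; case: eqP => [->|_].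
    + exact: Hge.
    + apply: Hle; case: Hs => H1 _; exact: H1.
  have := Hle _ _ _ i Hys; rewrite Hy /z eqxx; lra.
have Hseq : forall n : nat, exists d, D d /\ forall v i,
    (phi v (d v) i < phi v (s v) i + / INR (S n))%R.
  move=> n.
  have Hpos : (0 < / INR (S n))%R by apply: Rinv_0_lt_compat; apply: lt_0_INR; lia.
  have := @filt_list _ (leGP N) D (V N)
    (fun v d => forall i, (phi v (d v) i < phi v (s v) i + / INR (S n))%R) (enum (V N)) HD.
  case.
  - move=> v x z Hzx Hx i; have := Hle _ _ _ i (Hzx v); have := Hx i; lra.
  - move=> v _.
    have := @filt_list _ (leGP N) D (ordinal (k v))
      (fun i d => (phi v (d v) i < phi v (s v) i + / INR (S n))%R) (enum 'I_(k v)) HD.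
    case.
    + move=> i x z Hzx Hx; have := Hle _ _ _ i (Hzx v); lra.
    + move=> i _; exact: Happ.
    + move=> d [Dd Hd]; exists d; split=> // i; apply: Hd; by rewrite mem_enum.
  - move=> d [Dd Hd]; exists d; split=> // v i; apply: Hd; by rewrite mem_enum.
pose d := fun n => proj1_sig (constructive_indefinite_description _ (Hseq n)).
have Hd : forall n, D (d n) /\ forall v i,
    (phi v (d n v) i < phi v (s v) i + / INR (S n))%R.
  move=> n; exact: (proj2_sig (constructive_indefinite_description _ (Hseq n))).
have Hconv : forall v i, Un_cv (fun n => phi v (d n v) i) (phi v (s v) i).
  move=> v i; apply: cv_squeeze => n; split; last exact: (Hd n).2.
  apply: Hle; case: Hs => H1 _; exact: (H1 _ (Hd n).1 v).
have HdelC := fun e => Hdel e (fun n => d n (src N e)) (s (src N e)) (Hconv (src N e)).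
split.
- move=> y [x [Dx ->]]; apply: Hm; case: Hs => H1 _; exact: H1.
- move=> l Hl v.
  have Hav := Hal v (fun n (e : {e : E N | tgt N e == v}) => delta N (proj1_sig e) (d n (src N (proj1_sig e))))
     (fun e => delta N (proj1_sig e) (s (src N (proj1_sig e))))
     (fun e i => HdelC (proj1_sig e) i).
  apply/((Hbox v).1 (l v) (Phi N s v)) => j.
  refine (Rle_cv_lim _ (cv_const (phi v (l v) j)) (Hav j)) => n.
  apply: (Hle v); apply: (Hl (Phi N (d n))); exists (d n); split=> //; exact: (Hd n).1.
Qed.

Theorem mainTheorem7 (N : network)
  (Hcl : forall v : V N, complete_lattice (leX N v)) :
  (* Phi_* is Scott-continuous *)
  scott_continuous (leGP N) (leGP N) (Phi N) /\
  (* x_min = sup_n Phi_*^n(bot) *)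
  (forall bot xmin : PP N,
     (forall x, leGP N bot x) -> is_least_clearing N xmin ->
     is_sup (leGP N) (iterates N bot) xmin) /\
  (* if Phi_* preserves filtered infima, x_max = inf_n Phi_*^n(top) *)
  (preserves_filtered_infs (leGP N) (leGP N) (Phi N) ->
   forall top xmax : PP N,
     (forall x, leGP N x top) -> is_greatest_clearing N xmax ->
     is_inf (leGP N) (iterates N top) xmax) /\
  (* ... which holds when every X_v has finite height *)
  ((forall v : V N, finite_height (leX N v)) ->
   preserves_filtered_infs (leGP N) (leGP N) (Phi N)) /\
  (* ... or in the Euclidean compact-interval case *)
  (real_box_case N -> preserves_filtered_infs (leGP N) (leGP N) (Phi N)).
Proof.
split; first exact: Phi_sc.
split; first exact: part2.
split; first exact: part3.
split; first exact: part4.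
exact: part5.
Qed.
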